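(* Let $G$ be a group with a surjective homomorphism $f\colon G\to\mathbb{Z}$ with kernel $N$. If $N$ is not finitely generated, then no lexicographic left-order on $G$ where $\mathbb{Z}$ leads is regular.
   Context: A positive cone of a group $H$ is a subsemigroup $P$ with $H=P\sqcup P^{-1}\sqcup\{1\}$. A lexicographic left-order on $G$ where $\mathbb{Z}$ leads is one with positive cone $f^{-1}(P_{\mathbb{Z}})\cup P_N$ for a positive cone $P_{\mathbb{Z}}$ of $\mathbb{Z}$ and a positive cone $P_N$ of $N$. A left-order is regular if $G$ is finitely generated and there are a finite set $X$, a surjective monoid homomorphism $\pi\colon X^*\to G$ and a language $\mathcal{L}\subseteq X^*$ accepted by a finite state automaton with $\pi(\mathcal{L})$ equal to the positive cone. *)

(* Defs.v *)
From HB Require Import structures.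
From mathcomp Require Import all_boot all_algebra.
Set Implicit Arguments. Unset Strict Implicit. Unset Printing Implicit Defensive.
Import GRing.Theory.

Record group := Group {
  carrier :> Type;
  gmul : carrier -> carrier -> carrier;
  gone : carrier;
  ginv : carrier -> carrier;
  gmulA : forall x y z, gmul x (gmul y z) = gmul (gmul x y) z;
  gmul1 : forall x, gmul gone x = x;
  gmulV : forall x, gmul (ginv x) x = gone
}.

Arguments gmul {g} _ _.
Arguments gone {g}.
Arguments ginv {g} _.

Definition Zgroup : group :=
  @Group int (fun a b => (a + b)%R) 0%R (fun a => (- a)%R)
    (fun x y z => addrA x y z) (fun x => add0r x) (fun x => addNr x).

Definition is_hom (G H : group) (f : G -> H) : Prop :=
  forall x y, f (gmul x y) = gmul (f x) (f y).

Definition is_pos_cone (G : group) (S P : G -> Prop) : Prop :=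
  (forall x, P x -> S x) /\
  (forall x y, P x -> P y -> P (gmul x y)) /\
  (forall x, S x -> P x \/ P (ginv x) \/ x = gone) /\
  (forall x, ~ (P x /\ P (ginv x))) /\
  (forall x, P x -> x <> gone) /\
  (forall x, P (ginv x) -> x <> gone).

Inductive generated (G : group) (I : Type) (s : I -> G) : G -> Prop :=
| gen_one : generated s gone
| gen_gen : forall i, generated s (s i)
| gen_mul : forall x y, generated s x -> generated s y -> generated s (gmul x y)
| gen_inv : forall x, generated s x -> generated s (ginv x).

Definition fin_gen_sub (G : group) (S : G -> Prop) : Prop :=
  exists (I : finType) (s : I -> G), forall x, S x <-> generated s x.

Definition fin_gen (G : group) : Prop := fin_gen_sub (fun _ : G => True).

Record dfa (X : finType) := Dfa {
  dfa_state : finType;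
  dfa_start : dfa_state;
  dfa_delta : dfa_state -> X -> dfa_state;
  dfa_accept : pred dfa_state
}.

Definition dfa_accepts (X : finType) (A : dfa X) (w : seq X) : bool :=
  @dfa_accept X A (foldl (@dfa_delta X A) (@dfa_start X A) w).

Definition is_monoid_hom (X : finType) (G : group) (pi : seq X -> G) : Prop :=
  pi [::] = gone /\ forall u v, pi (u ++ v) = gmul (pi u) (pi v).

Definition regular_cone (G : group) (P : G -> Prop) : Prop :=
  fin_gen G /\
  exists (X : finType) (pi : seq X -> G) (A : dfa X),
    is_monoid_hom pi /\ (forall g, exists w, pi w = g) /\
    (forall g, P g <-> exists w, dfa_accepts A w /\ pi w = g).

(* Main.v *)
Require Import Defs.
From mathcomp Require Import all_boot all_algebra.
From mathcomp Require Import zify.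
From Stdlib Require Import ClassicalEpsilon Classical.
Set Implicit Arguments. Unset Strict Implicit. Unset Printing Implicit Defensive.
Import GRing.Theory.
Local Open Scope ring_scope.

Section GroupFacts.
Variable G : group.

Lemma gmulVr (x : G) : gmul x (ginv x) = gone.
Proof.
set y := gmul x (ginv x).
have yy : gmul y y = y.
  by rewrite /y -gmulA (gmulA (ginv x) x) gmulV gmul1.
have : gmul (ginv y) (gmul y y) = gmul (ginv y) y by rewrite yy.
by rewrite gmulA gmulV gmul1.
Qed.

Lemma gmulr1 (x : G) : gmul x gone = x.
Proof. by rewrite -(gmulV x) gmulA gmulVr gmul1. Qed.

Lemma ginvK (x : G) : ginv (ginv x) = x.
Proof. by rewrite -(gmulr1 (ginv (ginv x))) -(gmulV x) gmulA gmulV gmul1. Qed.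
End GroupFacts.

Section Main.
Variables (G : group) (f : G -> Zgroup) (hf : is_hom f).
Variables (X : finType) (A : dfa X) (pi : seq X -> G).
Hypothesis pi0 : pi [::] = gone.
Hypothesis piM : forall u v, pi (u ++ v) = gmul (pi u) (pi v).
Variables (PZ : Zgroup -> Prop) (PN : G -> Prop).
Hypothesis asymZ : forall x, ~ (PZ x /\ PZ (ginv x)).
Hypothesis PNsub : forall x, PN x -> f x = gone.
Hypothesis HP : forall g, (PZ (f g) \/ PN g) <-> exists w, dfa_accepts A w /\ pi w = g.

Lemma f1 : (f gone : int) = 0.
Proof. have := hf gone gone; rewrite gmul1 /= => h; lia. Qed.

Lemma fV x : (f (ginv x) : int) = - (f x : int).
Proof. have := hf (ginv x) x; rewrite gmulV f1 /= => h; lia. Qed.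

Lemma fM x y : (f (gmul x y) : int) = (f x : int) + (f y : int).
Proof. by rewrite hf. Qed.

Definition dst a := foldl (@dfa_delta X A) (@dfa_start X A) a.
Definition ext a := exists c, dfa_accepts A (a ++ c) /\ (f (pi (a ++ c)) : int) = 0.

Lemma accP w : dfa_accepts A w -> PZ (f (pi w)) \/ (f (pi w) : int) = 0.
Proof.
move=> Hw; have : exists w', dfa_accepts A w' /\ pi w' = pi w by exists w.
move/HP => [H|H]; [by left | right; exact: PNsub].
Qed.

Lemma acc_swap a a' c : dst a = dst a' -> dfa_accepts A (a' ++ c) -> dfa_accepts A (a ++ c).
Proof. by rewrite /dfa_accepts !foldl_cat; rewrite /dst => ->. Qed.

Lemma consist a a' : dst a = dst a' -> ext a -> ext a' -> (f (pi a) : int) = f (pi a').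
Proof.
move=> Ed [c [ac fc]] [c' [ac' fc']].
have key : forall x : int, (PZ x \/ x = 0) -> (PZ (-x) \/ -x = 0) -> x = 0.
  move=> x [H1|H1] [H2|H2] //; [ | lia].
  by case: (asymZ (conj H1 H2)).
have a1 := accP (acc_swap Ed ac').
have a2 := accP (acc_swap (esym Ed) ac).
move: fc fc' a1 a2; rewrite !piM !fM => fc fc'.
have -> : (f (pi a) : int) + f (pi c') = f (pi a) - f (pi a') by lia.
have -> : (f (pi a') : int) + f (pi c) = - (f (pi a) - f (pi a')) by lia.
move=> a1 a2; have := key _ a1 a2; lia.
Qed.

Lemma choose_pref (q : dfa_state A) :
  {a : seq X | (exists a', dst a' = q /\ ext a') -> dst a = q /\ ext a}.
Proof.
apply: constructive_indefinite_description.
case: (classic (exists a', dst a' = q /\ ext a')) => [[a' H]|H].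
  by exists a'.
by exists [::].
Qed.

Definition gq q := pi (sval (choose_pref q)).

Lemma gq_f a : ext a -> (f (gq (dst a)) : int) = f (pi a).
Proof.
move=> Ha.
have [Hd He] := svalP (choose_pref (dst a)) (ex_intro _ a (conj erefl Ha)).
exact: consist Hd He Ha.
Qed.

Definition I := (((dfa_state A * X) * dfa_state A) + dfa_state A)%type.

Definition gen_fun (i : I) : G :=
  match i with
  | inl (q, x, q') =>
      let e := gmul (gmul (gq q) (pi [:: x])) (ginv (gq q')) in
      if (f e : int) == 0 then e else gone
  | inr q => if (f (gq q) : int) == 0 then gq q else gone
  end.

Lemma gen_sub x : generated gen_fun x -> (f x : int) = 0.
Proof.
elim=> [|i|y z _ Hy _ Hz|y _ Hy].
- exact: f1.
- case: i => [[[q x0] q']|q] /=; case: ifP => [/eqP //|_]; exact: f1.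
- by rewrite fM Hy Hz.
- by rewrite fV Hy.
Qed.

Lemma tele w : forall a, dfa_accepts A (a ++ w) -> (f (pi (a ++ w)) : int) = 0 ->
  generated gen_fun (gmul (gq (dst a)) (pi w)).
Proof.
elim: w => [|x w IH] a Hacc Hf.
- rewrite pi0 gmulr1.
  have Ha : ext a by exists [::].
  rewrite cats0 in Hf.
  have E : (f (gq (dst a)) : int) = 0 by rewrite gq_f.
  have := gen_gen gen_fun (inr (dst a)); rewrite /= E eqxx; exact.
- have Ea : a ++ x :: w = (a ++ [:: x]) ++ w by rewrite -catA.
  have Ha : ext a by exists (x :: w).
  have Hax : ext (a ++ [:: x]) by exists w; rewrite -Ea.
  rewrite Ea in Hacc Hf.
  have G2 := IH _ Hacc Hf.
  set e := gmul (gmul (gq (dst a)) (pi [:: x])) (ginv (gq (dst (a ++ [:: x])))).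
  have fe : (f e : int) = 0.
    by rewrite /e !fM fV !gq_f // piM fM; lia.
  have G1 : generated gen_fun e.
    have := gen_gen gen_fun (inl (dst a, x, dst (a ++ [:: x]))).
    by rewrite /= -/e fe eqxx.
  have := gen_mul G1 G2.
  rewrite /e -gmulA (gmulA (ginv _)) gmulV gmul1 -gmulA -piM //.
Qed.

Lemma accepted_gen w : dfa_accepts A w -> (f (pi w) : int) = 0 -> generated gen_fun (pi w).
Proof.
move=> Hacc Hf.
have G2 := tele (a:=[::]) Hacc Hf.
have E : (f (gq (dst [::])) : int) = 0.
  rewrite gq_f ?pi0 ?f1 //; by exists w.
have G1 : generated gen_fun (ginv (gq (dst [::]))).
  apply: gen_inv; have := gen_gen gen_fun (inr (dst [::])); by rewrite /= E eqxx.
have := gen_mul G1 G2.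
by rewrite gmulA gmulV gmul1.
Qed.

End Main.

Theorem lemma3p11 (G : group) (f : G -> Zgroup) :
  is_hom f -> (forall n : Zgroup, exists g, f g = n) ->
  ~ fin_gen_sub (fun g : G => f g = gone) ->
  forall (PZ : Zgroup -> Prop) (PN : G -> Prop),
    is_pos_cone (fun _ : Zgroup => True) PZ ->
    is_pos_cone (fun g : G => f g = gone) PN ->
    ~ regular_cone (fun g : G => PZ (f g) \/ PN g).
Proof.
move=> hf _ nfg PZ PN [_ [_ [_ [asymZ _]]]] [PNsub [_ [triN _]]]
  [_ [X [pi [A [[pi0 piM] [_ HP]]]]]].
apply: nfg.
exists (((dfa_state A * X) * dfa_state A) + dfa_state A)%type.
exists (@gen_fun G f X A pi); move=> g; split.
- move=> Hg.
  have acc : forall h, PN h -> generated (@gen_fun G f X A pi) h.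
    move=> h Hh.
    have : exists w, dfa_accepts A w /\ pi w = h by apply/HP; right.
    move=> [w [Hw Ew]]; rewrite -Ew.
    apply: (accepted_gen hf pi0 piM asymZ PNsub HP Hw).
    by rewrite Ew; apply: PNsub.
  case: (triN g Hg) => [H|[H|->]].
  + exact: acc.
  + rewrite -(ginvK g); apply: gen_inv; exact: acc.
  + exact: gen_one.
- move/(gen_sub hf) => H; exact: H.
Qed.
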